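(* Let $L$ be a Lie algebra over a field $K$ of characteristic different from $2$ and $3$. If $L$ possesses a nonzero commutative $2$-cocycle, then $L$ has a nonzero homomorphic image satisfying the standard identity of degree $5$: $$\sum_{\sigma\in S_4}\operatorname{sgn}(\sigma)\,[[[[y,x_{\sigma(1)}],x_{\sigma(2)}],x_{\sigma(3)}],x_{\sigma(4)}]=0\quad\text{for all } x_1,\dots,x_4,y.$$
   Context: A commutative $2$-cocycle on $L$ is a symmetric bilinear form $\varphi:L\times L\to K$ such that $\varphi([x,y],z)+\varphi([z,x],y)+\varphi([y,z],x)=0$ for all $x,y,z\in L$. *)

(* Defs.v *)
From HB Require Import structures.
From mathcomp Require Import all_boot all_order all_algebra all_fingroup.
Set Implicit Arguments. Unset Strict Implicit. Unset Printing Implicit Defensive.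
Import GRing.Theory.
Local Open Scope ring_scope.

Definition is_lie_bracket (K : fieldType) (V : lmodType K) (br : V -> V -> V) : Prop :=
  [/\ (forall (a : K) (x y z : V), br (a *: x + y) z = a *: br x z + br y z),
      (forall (a : K) (x y z : V), br z (a *: x + y) = a *: br z x + br z y),
      (forall x : V, br x x = 0) &
      (forall x y z : V, br (br x y) z + br (br y z) x + br (br z x) y = 0)].

Definition bilinear_form (K : fieldType) (V : lmodType K) (phi : V -> V -> K) : Prop :=
  (forall (a : K) (x y z : V), phi (a *: x + y) z = a * phi x z + phi y z) /\
  (forall (a : K) (x y z : V), phi z (a *: x + y) = a * phi z x + phi z y).

Definition comm_2cocycle (K : fieldType) (V : lmodType K) (br : V -> V -> V)
  (phi : V -> V -> K) : Prop :=
  [/\ bilinear_form phi,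
      (forall x y : V, phi x y = phi y x) &
      (forall x y z : V, phi (br x y) z + phi (br z x) y + phi (br y z) x = 0)].

Definition lie_hom (K : fieldType) (V W : lmodType K) (brV : V -> V -> V)
  (brW : W -> W -> W) (f : V -> W) : Prop :=
  (forall (a : K) (x y : V), f (a *: x + y) = a *: f x + f y) /\
  (forall x y : V, f (brV x y) = brW (f x) (f y)).

Definition std5 (K : fieldType) (V : lmodType K) (br : V -> V -> V)
  (x : 'I_4 -> V) (y : V) : V :=
  \sum_(s : 'S_4) ((-1) ^+ (odd_perm s) : K) *:
     br (br (br (br y (x (s (inord 0)))) (x (s (inord 1)))) (x (s (inord 2))))
        (x (s (inord 3))).

Definition satisfies_std5 (K : fieldType) (V : lmodType K) (br : V -> V -> V) : Prop :=
  forall (x : 'I_4 -> V) (y : V), std5 br x y = 0.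

(* Main.v *)
Require Import Defs.
From HB Require Import structures.
From mathcomp Require Import all_boot all_order all_algebra all_fingroup.
From mathcomp Require Import ring.
From Stdlib Require Import ClassicalEpsilon FunctionalExtensionality PropExtensionality.
Set Implicit Arguments. Unset Strict Implicit. Unset Printing Implicit Defensive.
Import GRing.Theory.
Local Open Scope ring_scope.

Definition word := (nat * seq nat)%type.
Definition combo := seq (int * word).

Definition capp (c : combo) (n : nat) : combo := map (fun p => (p.1, (p.2.1, rcons p.2.2 n))) c.
Definition cscale (z : int) (c : combo) : combo := map (fun p => (z * p.1, p.2)) c.
Fixpoint brw_rev (c : combo) (h : nat) (rr : seq nat) : combo :=
  match rr with
  | [::] => capp c h
  | n :: rr' => capp (brw_rev c h rr') n ++ cscale (-1) (brw_rev (capp c n) h rr')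
  end.
Fixpoint cbr (c1 c2 : combo) : combo :=
  match c2 with
  | [::] => [::]
  | p :: c2' => cscale p.1 (brw_rev c1 p.2.1 (rev p.2.2)) ++ cbr c1 c2'
  end.
Inductive expr := EVar of nat | EBr of expr & expr.
Fixpoint norm (t : expr) : combo :=
  match t with
  | EVar n => [:: (1, (n, [::]))]
  | EBr a b => cbr (norm a) (norm b)
  end.
Definition canonw (w : word) : combo :=
  let m := foldl minn w.1 w.2 in
  if w.1 == m then [:: (1, w)] else
  let i := index m w.2 in
  foldl capp (cscale (-1) (brw_rev [:: (1, (m, [::]))] w.1 (rev (take i w.2)))) (drop i.+1 w.2).
Fixpoint canon (c : combo) : combo :=
  match c with [::] => [::] | p :: c' => cscale p.1 (canonw p.2) ++ canon c' end.
Definition cnorm t := canon (norm t).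
Definition pcombo := seq (int * (word * word)).
Definition ord2 (w1 w2 : word) := if (w1.1 <= w2.1)%N then (w1, w2) else (w2, w1).
Fixpoint pmul (c1 c2 : combo) : pcombo :=
  match c1 with
  | [::] => [::]
  | p :: c1' => map (fun q => (p.1 * q.1, ord2 p.2 q.2)) c2 ++ pmul c1' c2
  end.
Definition pnorm a b := pmul (cnorm a) (cnorm b).
Definition pscale (z : int) (c : pcombo) : pcombo := map (fun p => (z * p.1, p.2)) c.
Definition rel (r : expr * expr * expr) : pcombo :=
  let: (A, B, C) := r in pnorm (EBr A B) C ++ pnorm (EBr C A) B ++ pnorm (EBr B C) A.
Fixpoint combine (cert : seq (int * (expr * expr * expr))) : pcombo :=
  match cert with [::] => [::] | p :: c => pscale (- p.1) (rel p.2) ++ combine c end.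
Fixpoint tcomb (l : seq (int * expr)) (u : expr) : pcombo :=
  match l with [::] => [::] | p :: l' => pscale p.1 (pnorm p.2 u) ++ tcomb l' u end.
Definition coefsum {T : eqType} (k : T) (l : seq (int * T)) : int :=
  \sum_(p <- l | p.2 == k) p.1.
Fixpoint csum {T : eqType} (k : T) (l : seq (int * T)) : int :=
  match l with [::] => 0 | p :: l' => if p.2 == k then p.1 + csum k l' else csum k l' end.
Lemma csumE (T : eqType) (k : T) l : csum k l = coefsum k l.
Proof.
rewrite /coefsum; elim: l => [|p l IH] /=; first by rewrite big_nil.
by rewrite big_cons IH.
Qed.
Definition zcheck {T : eqType} (l : seq (int * T)) : bool :=
  all (fun k => csum k l == 0) (undup (map snd l)).

Lemma zcheck_sound (T : eqType) (V : zmodType) (f : T -> V) (l : seq (int * T)) :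
  zcheck l -> \sum_(p <- l) f p.2 *~ p.1 = 0.
Proof.
move: {2}(size l) (leqnn (size l)) => n; elim: n l => [|n IH] l.
  by rewrite leqn0 => /nilP ->; rewrite big_nil.
case: l => [|q l] Hs Hc; first by rewrite big_nil.
set k := q.2.
rewrite (bigID (fun p => p.2 == k)) /=.
have -> : \sum_(p <- q :: l | p.2 == k) f p.2 *~ p.1 = f k *~ coefsum k (q :: l).
  rewrite /coefsum.
  have -> : \sum_(p <- q :: l | p.2 == k) f p.2 *~ p.1 = \sum_(p <- q :: l | p.2 == k) f k *~ p.1.
    by apply: eq_bigr => p /eqP ->.
  by rewrite mulrz_sumr.
have /allP Hc0 := Hc.
have Hc' : {in [seq i.2 | i <- q :: l], forall x, coefsum x (q :: l) == 0}.
  by move=> x Hx; rewrite -csumE; apply: Hc0; rewrite mem_undup.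
have : coefsum k (q :: l) == 0 by apply: Hc'; rewrite inE eqxx.
move/eqP => ->; rewrite mulr0z add0r.
rewrite -(big_filter _ (fun p : int * T => ~~ (p.2 == k))); apply: IH.
  rewrite size_filter /=; rewrite /k eqxx /=.
  by apply: leq_trans (count_size _ _) _; rewrite -ltnS.
apply/allP => k'; rewrite mem_undup csumE => /mapP [p]; rewrite mem_filter => /andP [Hpk Hp] ->.
rewrite /coefsum big_filter_cond.
rewrite (eq_bigl (fun i => i.2 == p.2)); last first.
  move=> i /=; case: (i.2 =P k) => Hi /=; last by []. by rewrite Hi eq_sym (negbTE Hpk).
have H : p.2 \in [seq i.2 | i <- q :: l] by apply/mapP; exists p.
by move: (Hc' _ H); rewrite /coefsum.
Qed.

Section Sound.
Variables (K : fieldType) (L : lmodType K) (br : L -> L -> L) (phi : L -> L -> K).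
Hypothesis brDl : forall x y z, br (x + y) z = br x z + br y z.
Hypothesis brZl : forall (a : K) x z, br (a *: x) z = a *: br x z.
Hypothesis brDr : forall x y z, br z (x + y) = br z x + br z y.
Hypothesis brZr : forall (a : K) x z, br z (a *: x) = a *: br z x.
Hypothesis brA : forall x y, br x y = - br y x.
Hypothesis jac : forall x y z, br (br x y) z + br (br y z) x + br (br z x) y = 0.
Hypothesis phiDl : forall x y z, phi (x + y) z = phi x z + phi y z.
Hypothesis phiZl : forall (a : K) x z, phi (a *: x) z = a * phi x z.
Hypothesis phiC : forall x y, phi x y = phi y x.
Hypothesis coc : forall x y z, phi (br x y) z + phi (br z x) y + phi (br y z) x = 0.

Lemma br0l z : br 0 z = 0.
Proof. by have := brZl 0 0 z; rewrite !scale0r. Qed.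
Lemma br0r z : br z 0 = 0.
Proof. by have := brZr 0 0 z; rewrite !scale0r. Qed.
Lemma brMzl x z n : br (x *~ n) z = br x z *~ n.
Proof. by rewrite -!scaler_int brZl. Qed.
Lemma brMzr x z n : br z (x *~ n) = br z x *~ n.
Proof. by rewrite -!scaler_int brZr. Qed.
Lemma br_suml I (r : seq I) (F : I -> L) z : br (\sum_(i <- r) F i) z = \sum_(i <- r) br (F i) z.
Proof. exact: (big_morph (fun v => br v z) (fun x y => brDl x y z) (br0l z)). Qed.
Lemma br_sumr I (r : seq I) (F : I -> L) z : br z (\sum_(i <- r) F i) = \sum_(i <- r) br z (F i).
Proof. exact: (big_morph (fun v => br z v) (fun x y => brDr x y z) (br0r z)). Qed.
Lemma brNl x z : br (- x) z = - br x z.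
Proof. by rewrite -scaleN1r brZl scaleN1r. Qed.
Lemma phiDr x y z : phi z (x + y) = phi z x + phi z y.
Proof. by rewrite phiC phiDl !(phiC z). Qed.
Lemma phi0l z : phi 0 z = 0.
Proof. by have := phiZl 0 0 z; rewrite scale0r mul0r. Qed.
Lemma phi0r z : phi z 0 = 0.
Proof. by rewrite phiC phi0l. Qed.
Lemma phiMzl x z n : phi (x *~ n) z = phi x z *~ n.
Proof. by rewrite -scaler_int phiZl mulrzl. Qed.
Lemma phiMzr x z n : phi z (x *~ n) = phi z x *~ n.
Proof. by rewrite phiC phiMzl phiC. Qed.
Lemma phi_suml I (r : seq I) (F : I -> L) z : phi (\sum_(i <- r) F i) z = \sum_(i <- r) phi (F i) z.
Proof. exact: (big_morph (fun v => phi v z) (fun x y => phiDl x y z) (phi0l z)). Qed.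
Lemma phi_sumr I (r : seq I) (F : I -> L) z : phi z (\sum_(i <- r) F i) = \sum_(i <- r) phi z (F i).
Proof. exact: (big_morph (fun v => phi z v) (fun x y => phiDr x y z) (phi0r z)). Qed.
Lemma jac2 c w n : br c (br w n) = br (br c w) n - br (br c n) w.
Proof.
have := jac c w n; rewrite (brA (br w n)) (brA n c) brNl addrAC.
by move/eqP; rewrite subr_eq0 => /eqP.
Qed.

Variable e : nat -> L.
Definition evalw (w : word) := foldl (fun a n => br a (e n)) (e w.1) w.2.
Definition evalc (c : combo) := \sum_(p <- c) evalw p.2 *~ p.1.
Fixpoint eval t := match t with EVar n => e n | EBr a b => br (eval a) (eval b) end.
Definition evalp (c : pcombo) := \sum_(p <- c) phi (evalw p.2.1) (evalw p.2.2) *~ p.1.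

Lemma evalc_cat c1 c2 : evalc (c1 ++ c2) = evalc c1 + evalc c2.
Proof. exact: big_cat. Qed.
Lemma evalc_scale z c : evalc (cscale z c) = evalc c *~ z.
Proof.
rewrite /evalc big_map mulrz_suml; apply: eq_bigr => p _ /=.
by rewrite mulrC mulrzA.
Qed.
Lemma evalc_capp c n : evalc (capp c n) = br (evalc c) (e n).
Proof.
rewrite /evalc big_map br_suml; apply: eq_bigr => p _ /=.
by rewrite brMzl /evalw foldl_rcons.
Qed.
Lemma brw_rev_sound rr c h : evalc (brw_rev c h rr) = br (evalc c) (evalw (h, rev rr)).
Proof.
elim: rr c => [|n rr IH] c /=; first by rewrite evalc_capp.
rewrite evalc_cat evalc_scale !evalc_capp !IH evalc_capp rev_cons.
by rewrite {3}/evalw foldl_rcons jac2 mulrN1z.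
Qed.
Lemma cbr_sound c1 c2 : evalc (cbr c1 c2) = br (evalc c1) (evalc c2).
Proof.
elim: c2 => [|p c2 IH] /=; first by rewrite /evalc !big_nil br0r.
rewrite evalc_cat evalc_scale IH brw_rev_sound revK.
by rewrite [evalc (p :: c2)]/evalc big_cons brDr brMzr; case: p.
Qed.
Lemma norm_sound t : evalc (norm t) = eval t.
Proof.
elim: t => [n|a IHa b IHb] /=; first by rewrite /evalc big_seq1 mulr1z.
by rewrite cbr_sound IHa IHb.
Qed.
Lemma foldl_minn_mem a r : foldl minn a r \in a :: r.
Proof.
elim: r a => [|x r IH] a /=; first by rewrite inE.
have := IH (minn a x); rewrite !inE; case/orP => [/eqP ->|-> ]; last by rewrite !orbT.
by rewrite /minn; case: ltnP; rewrite eqxx ?orbT.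
Qed.
Lemma evalc_fold_capp r c : evalc (foldl capp c r) = foldl (fun a n => br a (e n)) (evalc c) r.
Proof. by elim: r c => [|n r IH] c //=; rewrite IH evalc_capp. Qed.
Lemma canonw_sound w : evalc (canonw w) = evalw w.
Proof.
case: w => h r; rewrite /canonw /=.
case: ifP => Hh; first by rewrite /evalc big_seq1 mulr1z.
set m := foldl minn h r.
have : m \in h :: r by apply: foldl_minn_mem.
rewrite inE; case/orP => [/eqP Hm|Hm].
  by move/eqP: Hm; rewrite eq_sym /m Hh.
rewrite evalc_fold_capp evalc_scale brw_rev_sound revK /evalc big_seq1 mulr1z mulrN1z.
rewrite -brA /evalw /=.
rewrite -[in RHS](cat_take_drop (index m r) r) foldl_cat.
by rewrite [in RHS](drop_nth m) ?index_mem // /= nth_index.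
Qed.
Lemma canon_sound c : evalc (canon c) = evalc c.
Proof.
elim: c => [|p c IH] //=.
by rewrite evalc_cat evalc_scale IH canonw_sound /evalc big_cons.
Qed.
Lemma cnorm_sound t : evalc (cnorm t) = eval t.
Proof. by rewrite /cnorm canon_sound norm_sound. Qed.
Lemma evalp_cat c1 c2 : evalp (c1 ++ c2) = evalp c1 + evalp c2.
Proof. exact: big_cat. Qed.
Lemma evalp_scale z c : evalp (pscale z c) = evalp c *~ z.
Proof.
rewrite /evalp big_map mulrz_suml; apply: eq_bigr => p _ /=.
by rewrite mulrC mulrzA.
Qed.
Lemma phi_ord2 w1 w2 : phi (evalw (ord2 w1 w2).1) (evalw (ord2 w1 w2).2) = phi (evalw w1) (evalw w2).
Proof. by rewrite /ord2; case: ifP => //= _; rewrite phiC. Qed.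
Lemma pmul_sound c1 c2 : evalp (pmul c1 c2) = phi (evalc c1) (evalc c2).
Proof.
elim: c1 => [|p c1 IH] /=; first by rewrite /evalp /evalc !big_nil phi0l.
rewrite evalp_cat IH [evalc (p :: c1)]/evalc big_cons phiDl phiMzl; congr (_ + _).
rewrite /evalp big_map /evalc phi_sumr mulrz_suml; apply: eq_bigr => q _ /=.
by rewrite phi_ord2 phiMzr -mulrzA (mulrC q.1).
Qed.
Lemma pnorm_sound a b : evalp (pnorm a b) = phi (eval a) (eval b).
Proof. by rewrite /pnorm pmul_sound !cnorm_sound. Qed.
Lemma rel_sound r : evalp (rel r) = 0.
Proof. by case: r => [[A B] C]; rewrite /rel !evalp_cat !pnorm_sound /= addrA coc. Qed.
Lemma combine_sound c : evalp (combine c) = 0.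
Proof.
elim: c => [|p c IH] /=; first by rewrite /evalp big_nil.
by rewrite evalp_cat IH evalp_scale rel_sound mul0rz addr0.
Qed.
Lemma tcomb_sound l u : evalp (tcomb l u) = \sum_(p <- l) phi (eval p.2) (eval u) *~ p.1.
Proof.
elim: l => [|p l IH] /=; first by rewrite /evalp !big_nil.
by rewrite evalp_cat IH evalp_scale pnorm_sound big_cons.
Qed.
Lemma cert_sound l u c : zcheck (tcomb l u ++ combine c) ->
  \sum_(p <- l) phi (eval p.2) (eval u) *~ p.1 = 0.
Proof.
move=> H; have := zcheck_sound (fun k : word * word => phi (evalw k.1) (evalw k.2)) H.
by rewrite -/(evalp _) evalp_cat combine_sound addr0 tcomb_sound.
Qed.
End Sound.

Lemma sumS_lift (V : zmodType) n (F : 'S_n.+1 -> V) :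
  \sum_(s : 'S_n.+1) F s = \sum_(j : 'I_n.+1) \sum_(s : 'S_n) F (lift_perm ord0 j s).
Proof.
rewrite (partition_big (fun s : 'S_n.+1 => s ord0) predT) //=.
apply: eq_bigr => j0 _.
set i0 := (ord0 : 'I_n.+1).
rewrite (reindex (lift_perm i0 j0)); last first.
  pose ulsf i (s : 'S_n.+1) k := odflt k (unlift (s i) (s (lift i k))).
  have ulsfK i (s : 'S_n.+1) k: lift (s i) (ulsf i s k) = s (lift i k).
    rewrite /ulsf; have:= neq_lift i k.
    by rewrite -(can_eq (permK s)) => /unlift_some[] ? ? ->.
  have inj_ulsf: injective (ulsf i0 _).
    move=> s; apply: can_inj (ulsf (s i0) s^-1%g) _ => k'.
    by rewrite {1}/ulsf ulsfK !permK liftK.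
  exists (fun s => perm (inj_ulsf s)) => [s _ | s].
    by apply/permP=> k'; rewrite permE /ulsf lift_perm_lift lift_perm_id liftK.
  move/(s _ =P _) => si0; apply/permP=> k.
  case: (unliftP i0 k) => [k'|] ->; rewrite ?lift_perm_id //.
  by rewrite lift_perm_lift -si0 permE ulsfK.
by apply: eq_bigl => s; rewrite lift_perm_id eqxx.
Qed.

Lemma sumS0 (V : zmodType) (F : 'S_0 -> V) : \sum_(s : 'S_0) F s = F 1%g.
Proof.
rewrite (big_pred1 1%g) // => s /=; by apply/esym/eqP/permP => -[].
Qed.

Definition S4L : seq (bool * seq nat) := Eval compute in [:: (false, [:: 0%N; 1%N; 2%N; 3%N]); (true, [:: 0%N; 1%N; 3%N; 2%N]); (true, [:: 0%N; 2%N; 1%N; 3%N]); (false, [:: 0%N; 2%N; 3%N; 1%N]); (false, [:: 0%N; 3%N; 1%N; 2%N]); (true, [:: 0%N; 3%N; 2%N; 1%N]); (true, [:: 1%N; 0%N; 2%N; 3%N]); (false, [:: 1%N; 0%N; 3%N; 2%N]); (false, [:: 1%N; 2%N; 0%N; 3%N]); (true, [:: 1%N; 2%N; 3%N; 0%N]); (true, [:: 1%N; 3%N; 0%N; 2%N]); (false, [:: 1%N; 3%N; 2%N; 0%N]); (false, [:: 2%N; 0%N; 1%N; 3%N]); (true, [:: 2%N; 0%N; 3%N; 1%N]); (true, [:: 2%N; 1%N; 0%N; 3%N]); (false, [:: 2%N; 1%N; 3%N; 0%N]); (false, [:: 2%N; 3%N; 0%N; 1%N]); (true, [:: 2%N;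 3%N; 1%N; 0%N]); (true, [:: 3%N; 0%N; 1%N; 2%N]); (false, [:: 3%N; 0%N; 2%N; 1%N]); (false, [:: 3%N; 1%N; 0%N; 2%N]); (true, [:: 3%N; 1%N; 2%N; 0%N]); (true, [:: 3%N; 2%N; 0%N; 1%N]); (false, [:: 3%N; 2%N; 1%N; 0%N])].

Lemma sumS4 (V : zmodType) (H : bool -> nat -> nat -> nat -> nat -> V) :
  \sum_(s : 'S_4) H (odd_perm s) (s (inord 0)) (s (inord 1)) (s (inord 2)) (s (inord 3)) =
  \sum_(p <- S4L) H p.1 (nth 0%N p.2 0) (nth 0%N p.2 1) (nth 0%N p.2 2) (nth 0%N p.2 3).
Proof.
have -> : (inord 0 : 'I_4) = ord0 by apply: val_inj; rewrite /= inordK.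
have -> : (inord 1 : 'I_4) = lift ord0 ord0 by apply: val_inj; rewrite /= inordK.
have -> : (inord 2 : 'I_4) = lift ord0 (lift ord0 ord0) by apply: val_inj; rewrite /= inordK.
have -> : (inord 3 : 'I_4) = lift ord0 (lift ord0 (lift ord0 ord0)) by apply: val_inj; rewrite /= inordK.
rewrite sumS_lift.
under eq_bigr do rewrite sumS_lift.
under eq_bigr do under eq_bigr do rewrite sumS_lift.
under eq_bigr do under eq_bigr do under eq_bigr do rewrite sumS_lift.
under eq_bigr do under eq_bigr do under eq_bigr do under eq_bigr do rewrite sumS0.
rewrite /=.
under eq_bigr do under eq_bigr do under eq_bigr do under eq_bigr do rewrite !odd_lift_perm !lift_perm_lift !lift_perm_id odd_perm1.
rewrite !big_ord_recl !big_ord0 /= /bump /=.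
rewrite /S4L !big_cons big_nil /= !addr0 !addrA.
by [].
Qed.

Definition T24 : seq (int * expr) := [::
  ((Posz 6), (EBr (EBr (EBr (EBr (EVar 0) (EVar 1)) (EVar 2)) (EVar 3)) (EVar 4)));
  ((Negz 5), (EBr (EBr (EBr (EBr (EVar 0) (EVar 1)) (EVar 2)) (EVar 4)) (EVar 3)));
  ((Negz 5), (EBr (EBr (EBr (EBr (EVar 0) (EVar 1)) (EVar 3)) (EVar 2)) (EVar 4)));
  ((Posz 6), (EBr (EBr (EBr (EBr (EVar 0) (EVar 1)) (EVar 3)) (EVar 4)) (EVar 2)));
  ((Posz 6), (EBr (EBr (EBr (EBr (EVar 0) (EVar 1)) (EVar 4)) (EVar 2)) (EVar 3)));
  ((Negz 5), (EBr (EBr (EBr (EBr (EVar 0) (EVar 1)) (EVar 4)) (EVar 3)) (EVar 2)));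
  ((Negz 5), (EBr (EBr (EBr (EBr (EVar 0) (EVar 2)) (EVar 1)) (EVar 3)) (EVar 4)));
  ((Posz 6), (EBr (EBr (EBr (EBr (EVar 0) (EVar 2)) (EVar 1)) (EVar 4)) (EVar 3)));
  ((Posz 6), (EBr (EBr (EBr (EBr (EVar 0) (EVar 2)) (EVar 3)) (EVar 1)) (EVar 4)));
  ((Negz 5), (EBr (EBr (EBr (EBr (EVar 0) (EVar 2)) (EVar 3)) (EVar 4)) (EVar 1)));
  ((Negz 5), (EBr (EBr (EBr (EBr (EVar 0) (EVar 2)) (EVar 4)) (EVar 1)) (EVar 3)));
  ((Posz 6), (EBr (EBr (EBr (EBr (EVar 0) (EVar 2)) (EVar 4)) (EVar 3)) (EVar 1)));
  ((Posz 6), (EBr (EBr (EBr (EBr (EVar 0) (EVar 3)) (EVar 1)) (EVar 2)) (EVar 4)));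
  ((Negz 5), (EBr (EBr (EBr (EBr (EVar 0) (EVar 3)) (EVar 1)) (EVar 4)) (EVar 2)));
  ((Negz 5), (EBr (EBr (EBr (EBr (EVar 0) (EVar 3)) (EVar 2)) (EVar 1)) (EVar 4)));
  ((Posz 6), (EBr (EBr (EBr (EBr (EVar 0) (EVar 3)) (EVar 2)) (EVar 4)) (EVar 1)));
  ((Posz 6), (EBr (EBr (EBr (EBr (EVar 0) (EVar 3)) (EVar 4)) (EVar 1)) (EVar 2)));
  ((Negz 5), (EBr (EBr (EBr (EBr (EVar 0) (EVar 3)) (EVar 4)) (EVar 2)) (EVar 1)));
  ((Negz 5), (EBr (EBr (EBr (EBr (EVar 0) (EVar 4)) (EVar 1)) (EVar 2)) (EVar 3)));
  ((Posz 6), (EBr (EBr (EBr (EBr (EVar 0) (EVar 4)) (EVar 1)) (EVar 3)) (EVar 2)));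
  ((Posz 6), (EBr (EBr (EBr (EBr (EVar 0) (EVar 4)) (EVar 2)) (EVar 1)) (EVar 3)));
  ((Negz 5), (EBr (EBr (EBr (EBr (EVar 0) (EVar 4)) (EVar 2)) (EVar 3)) (EVar 1)));
  ((Negz 5), (EBr (EBr (EBr (EBr (EVar 0) (EVar 4)) (EVar 3)) (EVar 1)) (EVar 2)));
  ((Posz 6), (EBr (EBr (EBr (EBr (EVar 0) (EVar 4)) (EVar 3)) (EVar 2)) (EVar 1)))].
Definition CERT : seq (int * (expr * expr * expr)) := [::
  ((Negz 1), ((EVar 0), (EBr (EBr (EBr (EVar 1) (EVar 3)) (EVar 2)) (EVar 5)), (EVar 4)));
  ((Negz 0), ((EBr (EVar 0) (EVar 4)), (EBr (EVar 1) (EVar 3)), (EBr (EVar 2) (EVar 5))));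
  ((Posz 1), ((EBr (EVar 0) (EVar 4)), (EBr (EBr (EVar 1) (EVar 3)) (EVar 5)), (EVar 2)));
  ((Posz 1), ((EBr (EBr (EVar 0) (EVar 4)) (EVar 5)), (EBr (EVar 1) (EVar 3)), (EVar 2)));
  ((Posz 2), ((EBr (EBr (EVar 0) (EVar 5)) (EVar 3)), (EBr (EVar 1) (EVar 4)), (EVar 2)));
  ((Posz 2), ((EVar 0), (EBr (EBr (EBr (EVar 1) (EVar 4)) (EVar 2)) (EVar 5)), (EVar 3)));
  ((Posz 1), ((EBr (EVar 0) (EVar 3)), (EBr (EVar 1) (EVar 4)), (EBr (EVar 2) (EVar 5))));
  ((Negz 0), ((EBr (EVar 0) (EVar 3)), (EBr (EBr (EVar 1) (EVar 4)) (EVar 5)), (EVar 2)));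
  ((Negz 0), ((EBr (EVar 0) (EVar 2)), (EBr (EVar 1) (EVar 4)), (EBr (EVar 3) (EVar 5))));
  ((Posz 1), ((EBr (EVar 0) (EVar 2)), (EBr (EBr (EVar 1) (EVar 4)) (EVar 5)), (EVar 3)));
  ((Posz 1), ((EBr (EBr (EVar 0) (EVar 2)) (EVar 5)), (EBr (EVar 1) (EVar 4)), (EVar 3)));
  ((Posz 2), ((EBr (EBr (EVar 0) (EVar 5)) (EVar 3)), (EVar 1), (EBr (EVar 2) (EVar 4))));
  ((Negz 0), ((EBr (EBr (EVar 0) (EVar 3)) (EVar 4)), (EBr (EVar 1) (EVar 5)), (EVar 2)));
  ((Posz 1), ((EBr (EVar 0) (EVar 4)), (EBr (EVar 1) (EVar 2)), (EBr (EVar 3) (EVar 5))));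
  ((Negz 0), ((EBr (EBr (EVar 0) (EVar 4)) (EVar 5)), (EBr (EVar 1) (EVar 2)), (EVar 3)));
  ((Negz 0), ((EBr (EVar 0) (EVar 4)), (EBr (EBr (EVar 1) (EVar 2)) (EVar 5)), (EVar 3)));
  ((Posz 1), ((EBr (EBr (EVar 0) (EVar 3)) (EVar 2)), (EVar 1), (EBr (EVar 4) (EVar 5))));
  ((Posz 1), ((EBr (EBr (EVar 0) (EVar 3)) (EVar 2)), (EBr (EVar 1) (EVar 5)), (EVar 4)));
  ((Negz 0), ((EBr (EBr (EBr (EVar 0) (EVar 3)) (EVar 2)) (EVar 5)), (EVar 1), (EVar 4)));
  ((Negz 0), ((EBr (EBr (EVar 0) (EVar 2)) (EVar 3)), (EVar 1), (EBr (EVar 4) (EVar 5))));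
  ((Negz 0), ((EBr (EBr (EVar 0) (EVar 2)) (EVar 3)), (EBr (EVar 1) (EVar 5)), (EVar 4)));
  ((Posz 1), ((EBr (EBr (EBr (EVar 0) (EVar 2)) (EVar 3)) (EVar 5)), (EVar 1), (EVar 4)));
  ((Posz 1), ((EBr (EVar 0) (EVar 2)), (EBr (EVar 1) (EVar 3)), (EBr (EVar 4) (EVar 5))));
  ((Negz 0), ((EBr (EVar 0) (EVar 2)), (EBr (EBr (EVar 1) (EVar 3)) (EVar 5)), (EVar 4)));
  ((Negz 0), ((EBr (EBr (EVar 0) (EVar 2)) (EVar 5)), (EBr (EVar 1) (EVar 3)), (EVar 4)));
  ((Negz 0), ((EBr (EVar 0) (EVar 4)), (EBr (EVar 1) (EVar 5)), (EBr (EVar 2) (EVar 3))));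
  ((Posz 1), ((EBr (EBr (EVar 0) (EVar 4)) (EVar 3)), (EBr (EVar 1) (EVar 5)), (EVar 2)));
  ((Negz 1), ((EVar 0), (EBr (EBr (EBr (EVar 1) (EVar 5)) (EVar 2)) (EVar 3)), (EVar 4)));
  ((Posz 1), ((EBr (EVar 0) (EVar 3)), (EBr (EVar 1) (EVar 5)), (EBr (EVar 2) (EVar 4))));
  ((Negz 1), ((EBr (EBr (EBr (EVar 0) (EVar 4)) (EVar 2)) (EVar 3)), (EVar 1), (EVar 5)));
  ((Negz 0), ((EBr (EBr (EVar 0) (EVar 4)) (EVar 2)), (EVar 1), (EBr (EVar 3) (EVar 5))));
  ((Posz 1), ((EBr (EBr (EBr (EVar 0) (EVar 4)) (EVar 2)) (EVar 5)), (EVar 1), (EVar 3)));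
  ((Negz 1), ((EBr (EBr (EVar 0) (EVar 5)) (EVar 4)), (EVar 1), (EBr (EVar 2) (EVar 3))));
  ((Negz 0), ((EBr (EVar 0) (EVar 3)), (EBr (EVar 1) (EVar 2)), (EBr (EVar 4) (EVar 5))));
  ((Posz 1), ((EBr (EVar 0) (EVar 3)), (EBr (EBr (EVar 1) (EVar 2)) (EVar 5)), (EVar 4)));
  ((Posz 1), ((EBr (EBr (EVar 0) (EVar 3)) (EVar 5)), (EBr (EVar 1) (EVar 2)), (EVar 4)));
  ((Posz 2), ((EBr (EBr (EVar 0) (EVar 5)) (EVar 2)), (EBr (EVar 1) (EVar 3)), (EVar 4)));
  ((Posz 1), ((EBr (EVar 0) (EVar 4)), (EVar 1), (EBr (EBr (EVar 2) (EVar 3)) (EVar 5))));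
  ((Posz 1), ((EBr (EBr (EBr (EVar 0) (EVar 3)) (EVar 4)) (EVar 5)), (EVar 1), (EVar 2)));
  ((Negz 0), ((EBr (EBr (EVar 0) (EVar 3)) (EVar 4)), (EVar 1), (EBr (EVar 2) (EVar 5))));
  ((Posz 1), ((EBr (EBr (EVar 0) (EVar 4)) (EVar 5)), (EVar 1), (EBr (EVar 2) (EVar 3))));
  ((Posz 1), ((EBr (EBr (EVar 0) (EVar 4)) (EVar 3)), (EVar 1), (EBr (EVar 2) (EVar 5))));
  ((Negz 0), ((EBr (EBr (EBr (EVar 0) (EVar 4)) (EVar 3)) (EVar 5)), (EVar 1), (EVar 2)));
  ((Negz 0), ((EBr (EBr (EVar 0) (EVar 4)) (EVar 2)), (EBr (EVar 1) (EVar 5)), (EVar 3)));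
  ((Posz 1), ((EBr (EBr (EVar 0) (EVar 2)) (EVar 4)), (EVar 1), (EBr (EVar 3) (EVar 5))));
  ((Negz 0), ((EBr (EBr (EBr (EVar 0) (EVar 2)) (EVar 4)) (EVar 5)), (EVar 1), (EVar 3)));
  ((Posz 1), ((EBr (EBr (EVar 0) (EVar 2)) (EVar 4)), (EBr (EVar 1) (EVar 5)), (EVar 3)));
  ((Negz 0), ((EBr (EVar 0) (EVar 3)), (EVar 1), (EBr (EBr (EVar 2) (EVar 4)) (EVar 5))));
  ((Posz 1), ((EBr (EVar 0) (EVar 2)), (EVar 1), (EBr (EBr (EVar 3) (EVar 4)) (EVar 5))));
  ((Posz 2), ((EVar 0), (EBr (EBr (EBr (EVar 1) (EVar 5)) (EVar 3)) (EVar 2)), (EVar 4)));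
  ((Posz 2), ((EBr (EBr (EBr (EVar 0) (EVar 4)) (EVar 3)) (EVar 2)), (EVar 1), (EVar 5)));
  ((Negz 1), ((EBr (EBr (EBr (EVar 0) (EVar 4)) (EVar 5)) (EVar 1)), (EVar 2), (EVar 3)));
  ((Negz 1), ((EVar 0), (EBr (EBr (EBr (EVar 1) (EVar 5)) (EVar 4)) (EVar 2)), (EVar 3)));
  ((Negz 3), ((EBr (EBr (EVar 0) (EVar 4)) (EVar 3)), (EBr (EVar 1) (EVar 2)), (EVar 5)));
  ((Posz 2), ((EBr (EBr (EBr (EVar 0) (EVar 4)) (EVar 5)) (EVar 2)), (EVar 1), (EVar 3)));
  ((Negz 1), ((EVar 0), (EBr (EBr (EVar 1) (EVar 3)) (EVar 5)), (EBr (EVar 2) (EVar 4))));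
  ((Negz 1), ((EVar 0), (EBr (EBr (EBr (EVar 1) (EVar 3)) (EVar 5)) (EVar 4)), (EVar 2)));
  ((Posz 2), ((EVar 0), (EBr (EBr (EBr (EVar 1) (EVar 3)) (EVar 5)) (EVar 2)), (EVar 4)));
  ((Negz 1), ((EBr (EBr (EBr (EVar 0) (EVar 2)) (EVar 5)) (EVar 4)), (EVar 1), (EVar 3)));
  ((Posz 4), ((EBr (EBr (EVar 0) (EVar 2)) (EVar 3)), (EBr (EVar 1) (EVar 4)), (EVar 5)));
  ((Negz 1), ((EBr (EBr (EBr (EVar 0) (EVar 3)) (EVar 4)) (EVar 2)), (EVar 1), (EVar 5)));
  ((Negz 1), ((EVar 0), (EBr (EBr (EBr (EVar 1) (EVar 4)) (EVar 5)) (EVar 2)), (EVar 3)));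
  ((Posz 4), ((EBr (EBr (EVar 0) (EVar 3)) (EVar 4)), (EBr (EVar 1) (EVar 2)), (EVar 5)));
  ((Negz 1), ((EBr (EBr (EBr (EVar 0) (EVar 3)) (EVar 5)) (EVar 2)), (EVar 1), (EVar 4)));
  ((Negz 3), ((EBr (EBr (EVar 0) (EVar 3)) (EVar 2)), (EBr (EVar 1) (EVar 4)), (EVar 5)));
  ((Negz 1), ((EVar 0), (EBr (EVar 1) (EVar 2)), (EBr (EBr (EVar 3) (EVar 4)) (EVar 5))));
  ((Posz 2), ((EVar 0), (EVar 1), (EBr (EBr (EBr (EVar 2) (EVar 4)) (EVar 5)) (EVar 3))));
  ((Posz 2), ((EVar 0), (EBr (EBr (EBr (EVar 1) (EVar 5)) (EVar 2)) (EVar 4)), (EVar 3)));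
  ((Negz 1), ((EVar 0), (EBr (EBr (EBr (EVar 1) (EVar 2)) (EVar 4)) (EVar 5)), (EVar 3)));
  ((Posz 4), ((EBr (EBr (EVar 0) (EVar 4)) (EVar 2)), (EBr (EVar 1) (EVar 3)), (EVar 5)));
  ((Negz 3), ((EBr (EBr (EVar 0) (EVar 2)) (EVar 4)), (EBr (EVar 1) (EVar 3)), (EVar 5)));
  ((Posz 2), ((EBr (EBr (EBr (EVar 0) (EVar 3)) (EVar 2)) (EVar 4)), (EVar 1), (EVar 5)));
  ((Negz 0), ((EBr (EVar 0) (EVar 1)), (EBr (EBr (EVar 2) (EVar 4)) (EVar 5)), (EVar 3)));
  ((Negz 0), ((EBr (EBr (EBr (EVar 0) (EVar 4)) (EVar 1)) (EVar 5)), (EVar 2), (EVar 3)));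
  ((Posz 2), ((EBr (EBr (EVar 0) (EVar 5)) (EVar 1)), (EVar 2), (EBr (EVar 3) (EVar 4))));
  ((Posz 2), ((EBr (EBr (EVar 0) (EVar 5)) (EVar 1)), (EBr (EVar 2) (EVar 4)), (EVar 3)));
  ((Negz 1), ((EBr (EBr (EVar 0) (EVar 5)) (EVar 1)), (EBr (EVar 2) (EVar 3)), (EVar 4)));
  ((Posz 1), ((EBr (EVar 0) (EVar 1)), (EBr (EVar 2) (EVar 4)), (EBr (EVar 3) (EVar 5))));
  ((Posz 1), ((EBr (EBr (EVar 0) (EVar 4)) (EVar 1)), (EVar 2), (EBr (EVar 3) (EVar 5))));
  ((Posz 1), ((EBr (EBr (EVar 0) (EVar 4)) (EVar 1)), (EBr (EVar 2) (EVar 5)), (EVar 3)));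
  ((Posz 2), ((EVar 0), (EBr (EBr (EVar 1) (EVar 4)) (EVar 5)), (EBr (EVar 2) (EVar 3))));
  ((Posz 2), ((EVar 0), (EBr (EBr (EBr (EVar 1) (EVar 4)) (EVar 5)) (EVar 3)), (EVar 2)));
  ((Posz 2), ((EVar 0), (EBr (EBr (EVar 1) (EVar 2)) (EVar 5)), (EBr (EVar 3) (EVar 4))));
  ((Posz 2), ((EBr (EBr (EBr (EVar 0) (EVar 2)) (EVar 5)) (EVar 3)), (EVar 1), (EVar 4)));
  ((Posz 2), ((EVar 0), (EBr (EBr (EBr (EVar 1) (EVar 2)) (EVar 3)) (EVar 5)), (EVar 4)));
  ((Negz 1), ((EBr (EBr (EVar 0) (EVar 5)) (EVar 4)), (EBr (EVar 1) (EVar 3)), (EVar 2)));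
  ((Negz 1), ((EBr (EBr (EVar 0) (EVar 5)) (EVar 2)), (EVar 1), (EBr (EVar 3) (EVar 4))));
  ((Negz 1), ((EBr (EBr (EVar 0) (EVar 5)) (EVar 2)), (EBr (EVar 1) (EVar 4)), (EVar 3)));
  ((Posz 2), ((EBr (EBr (EVar 0) (EVar 5)) (EVar 4)), (EBr (EVar 1) (EVar 2)), (EVar 3)));
  ((Negz 3), ((EBr (EBr (EVar 0) (EVar 4)) (EVar 1)), (EBr (EVar 2) (EVar 3)), (EVar 5)));
  ((Negz 0), ((EBr (EBr (EVar 0) (EVar 1)) (EVar 4)), (EVar 2), (EBr (EVar 3) (EVar 5))));
  ((Negz 0), ((EBr (EBr (EVar 0) (EVar 1)) (EVar 4)), (EBr (EVar 2) (EVar 5)), (EVar 3)));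
  ((Posz 4), ((EBr (EBr (EVar 0) (EVar 1)) (EVar 4)), (EBr (EVar 2) (EVar 3)), (EVar 5)));
  ((Negz 1), ((EBr (EBr (EVar 0) (EVar 5)) (EVar 3)), (EBr (EVar 1) (EVar 2)), (EVar 4)));
  ((Posz 2), ((EBr (EBr (EBr (EVar 0) (EVar 1)) (EVar 5)) (EVar 4)), (EVar 2), (EVar 3)));
  ((Negz 1), ((EVar 0), (EVar 1), (EBr (EBr (EBr (EVar 2) (EVar 3)) (EVar 5)) (EVar 4))));
  ((Posz 1), ((EBr (EVar 0) (EVar 1)), (EBr (EBr (EVar 2) (EVar 3)) (EVar 5)), (EVar 4)));
  ((Posz 2), ((EBr (EBr (EBr (EVar 0) (EVar 3)) (EVar 5)) (EVar 1)), (EVar 2), (EVar 4)));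
  ((Posz 1), ((EBr (EBr (EBr (EVar 0) (EVar 3)) (EVar 1)) (EVar 5)), (EVar 2), (EVar 4)));
  ((Negz 1), ((EBr (EBr (EBr (EVar 0) (EVar 1)) (EVar 5)) (EVar 3)), (EVar 2), (EVar 4)));
  ((Negz 0), ((EBr (EVar 0) (EVar 1)), (EBr (EVar 2) (EVar 3)), (EBr (EVar 4) (EVar 5))));
  ((Posz 1), ((EBr (EBr (EBr (EVar 0) (EVar 1)) (EVar 4)) (EVar 5)), (EVar 2), (EVar 3)));
  ((Negz 0), ((EBr (EBr (EBr (EVar 0) (EVar 1)) (EVar 3)) (EVar 5)), (EVar 2), (EVar 4)));
  ((Posz 4), ((EBr (EBr (EVar 0) (EVar 3)) (EVar 1)), (EBr (EVar 2) (EVar 4)), (EVar 5)));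
  ((Negz 0), ((EBr (EBr (EVar 0) (EVar 3)) (EVar 1)), (EVar 2), (EBr (EVar 4) (EVar 5))));
  ((Negz 0), ((EBr (EBr (EVar 0) (EVar 3)) (EVar 1)), (EBr (EVar 2) (EVar 5)), (EVar 4)));
  ((Negz 3), ((EBr (EBr (EVar 0) (EVar 1)) (EVar 3)), (EBr (EVar 2) (EVar 4)), (EVar 5)));
  ((Posz 1), ((EBr (EBr (EVar 0) (EVar 1)) (EVar 3)), (EVar 2), (EBr (EVar 4) (EVar 5))));
  ((Posz 1), ((EBr (EBr (EVar 0) (EVar 1)) (EVar 3)), (EBr (EVar 2) (EVar 5)), (EVar 4)));
  ((Negz 1), ((EBr (EBr (EBr (EVar 0) (EVar 4)) (EVar 3)) (EVar 1)), (EVar 2), (EVar 5)));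
  ((Negz 1), ((EVar 0), (EBr (EVar 1) (EVar 4)), (EBr (EBr (EVar 2) (EVar 3)) (EVar 5))));
  ((Posz 2), ((EVar 0), (EBr (EVar 1) (EVar 3)), (EBr (EBr (EVar 2) (EVar 4)) (EVar 5))));
  ((Posz 2), ((EBr (EBr (EBr (EVar 0) (EVar 4)) (EVar 1)) (EVar 3)), (EVar 2), (EVar 5)));
  ((Posz 2), ((EBr (EBr (EBr (EVar 0) (EVar 3)) (EVar 4)) (EVar 1)), (EVar 2), (EVar 5)));
  ((Negz 1), ((EBr (EBr (EBr (EVar 0) (EVar 3)) (EVar 1)) (EVar 4)), (EVar 2), (EVar 5)));
  ((Negz 0), ((EBr (EVar 0) (EVar 1)), (EVar 2), (EBr (EBr (EVar 3) (EVar 4)) (EVar 5))));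
  ((Posz 1), ((EBr (EBr (EVar 0) (EVar 1)) (EVar 5)), (EBr (EVar 2) (EVar 3)), (EVar 4)));
  ((Negz 0), ((EBr (EBr (EVar 0) (EVar 1)) (EVar 5)), (EBr (EVar 2) (EVar 4)), (EVar 3)));
  ((Negz 1), ((EVar 0), (EVar 1), (EBr (EBr (EBr (EVar 2) (EVar 5)) (EVar 3)) (EVar 4))));
  ((Posz 2), ((EVar 0), (EBr (EBr (EBr (EVar 1) (EVar 2)) (EVar 5)) (EVar 4)), (EVar 3)));
  ((Posz 2), ((EBr (EBr (EBr (EVar 0) (EVar 3)) (EVar 5)) (EVar 4)), (EVar 1), (EVar 2)));
  ((Negz 1), ((EVar 0), (EBr (EBr (EBr (EVar 1) (EVar 5)) (EVar 3)) (EVar 4)), (EVar 2)));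
  ((Negz 1), ((EBr (EBr (EBr (EVar 0) (EVar 2)) (EVar 3)) (EVar 4)), (EVar 1), (EVar 5)));
  ((Posz 2), ((EBr (EBr (EBr (EVar 0) (EVar 1)) (EVar 3)) (EVar 4)), (EVar 2), (EVar 5)));
  ((Posz 2), ((EVar 0), (EVar 1), (EBr (EBr (EBr (EVar 2) (EVar 5)) (EVar 4)) (EVar 3))));
  ((Negz 1), ((EBr (EBr (EBr (EVar 0) (EVar 4)) (EVar 5)) (EVar 3)), (EVar 1), (EVar 2)));
  ((Negz 1), ((EVar 0), (EBr (EBr (EBr (EVar 1) (EVar 2)) (EVar 5)) (EVar 3)), (EVar 4)));
  ((Negz 0), ((EBr (EVar 0) (EVar 2)), (EBr (EVar 1) (EVar 5)), (EBr (EVar 3) (EVar 4))));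
  ((Posz 1), ((EBr (EVar 0) (EVar 1)), (EBr (EVar 2) (EVar 5)), (EBr (EVar 3) (EVar 4))));
  ((Posz 1), ((EBr (EBr (EVar 0) (EVar 2)) (EVar 5)), (EVar 1), (EBr (EVar 3) (EVar 4))));
  ((Posz 2), ((EVar 0), (EBr (EBr (EBr (EVar 1) (EVar 5)) (EVar 4)) (EVar 3)), (EVar 2)));
  ((Posz 2), ((EBr (EBr (EBr (EVar 0) (EVar 2)) (EVar 4)) (EVar 3)), (EVar 1), (EVar 5)));
  ((Negz 0), ((EBr (EBr (EVar 0) (EVar 1)) (EVar 5)), (EVar 2), (EBr (EVar 3) (EVar 4))));
  ((Negz 1), ((EBr (EBr (EBr (EVar 0) (EVar 1)) (EVar 4)) (EVar 3)), (EVar 2), (EVar 5)));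
  ((Negz 0), ((EBr (EBr (EVar 0) (EVar 3)) (EVar 5)), (EBr (EVar 1) (EVar 4)), (EVar 2)));
  ((Negz 0), ((EBr (EBr (EVar 0) (EVar 3)) (EVar 5)), (EVar 1), (EBr (EVar 2) (EVar 4))));
  ((Negz 1), ((EBr (EBr (EBr (EVar 0) (EVar 2)) (EVar 5)) (EVar 1)), (EVar 3), (EVar 4)));
  ((Negz 0), ((EBr (EBr (EBr (EVar 0) (EVar 2)) (EVar 1)) (EVar 5)), (EVar 3), (EVar 4)));
  ((Posz 2), ((EBr (EBr (EBr (EVar 0) (EVar 1)) (EVar 5)) (EVar 2)), (EVar 3), (EVar 4)));
  ((Posz 1), ((EBr (EBr (EBr (EVar 0) (EVar 1)) (EVar 2)) (EVar 5)), (EVar 3), (EVar 4)));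
  ((Negz 3), ((EBr (EBr (EVar 0) (EVar 2)) (EVar 1)), (EBr (EVar 3) (EVar 4)), (EVar 5)));
  ((Posz 1), ((EBr (EBr (EVar 0) (EVar 2)) (EVar 1)), (EVar 3), (EBr (EVar 4) (EVar 5))));
  ((Posz 1), ((EBr (EBr (EVar 0) (EVar 2)) (EVar 1)), (EBr (EVar 3) (EVar 5)), (EVar 4)));
  ((Posz 4), ((EBr (EBr (EVar 0) (EVar 1)) (EVar 2)), (EBr (EVar 3) (EVar 4)), (EVar 5)));
  ((Negz 0), ((EBr (EBr (EVar 0) (EVar 1)) (EVar 2)), (EVar 3), (EBr (EVar 4) (EVar 5))));
  ((Negz 0), ((EBr (EBr (EVar 0) (EVar 1)) (EVar 2)), (EBr (EVar 3) (EVar 5)), (EVar 4)));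
  ((Posz 2), ((EBr (EBr (EBr (EVar 0) (EVar 4)) (EVar 2)) (EVar 1)), (EVar 3), (EVar 5)));
  ((Negz 1), ((EVar 0), (EVar 1), (EBr (EBr (EBr (EVar 2) (EVar 4)) (EVar 3)) (EVar 5))));
  ((Negz 1), ((EVar 0), (EBr (EBr (EBr (EVar 1) (EVar 4)) (EVar 3)) (EVar 5)), (EVar 2)));
  ((Posz 2), ((EVar 0), (EVar 1), (EBr (EBr (EBr (EVar 2) (EVar 3)) (EVar 4)) (EVar 5))));
  ((Posz 2), ((EVar 0), (EBr (EBr (EBr (EVar 1) (EVar 3)) (EVar 4)) (EVar 5)), (EVar 2)));
  ((Negz 1), ((EBr (EBr (EBr (EVar 0) (EVar 4)) (EVar 1)) (EVar 2)), (EVar 3), (EVar 5)));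
  ((Negz 1), ((EBr (EBr (EBr (EVar 0) (EVar 2)) (EVar 4)) (EVar 1)), (EVar 3), (EVar 5)));
  ((Posz 2), ((EBr (EBr (EBr (EVar 0) (EVar 2)) (EVar 1)) (EVar 4)), (EVar 3), (EVar 5)));
  ((Posz 2), ((EBr (EBr (EBr (EVar 0) (EVar 1)) (EVar 4)) (EVar 2)), (EVar 3), (EVar 5)));
  ((Negz 1), ((EBr (EBr (EBr (EVar 0) (EVar 1)) (EVar 2)) (EVar 4)), (EVar 3), (EVar 5)));
  ((Negz 1), ((EBr (EBr (EBr (EVar 0) (EVar 3)) (EVar 2)) (EVar 1)), (EVar 4), (EVar 5)));
  ((Posz 2), ((EBr (EBr (EBr (EVar 0) (EVar 3)) (EVar 1)) (EVar 2)), (EVar 4), (EVar 5)));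
  ((Posz 2), ((EBr (EBr (EBr (EVar 0) (EVar 2)) (EVar 3)) (EVar 1)), (EVar 4), (EVar 5)));
  ((Negz 1), ((EBr (EBr (EBr (EVar 0) (EVar 2)) (EVar 1)) (EVar 3)), (EVar 4), (EVar 5)));
  ((Negz 1), ((EBr (EBr (EBr (EVar 0) (EVar 1)) (EVar 3)) (EVar 2)), (EVar 4), (EVar 5)));
  ((Posz 2), ((EBr (EBr (EBr (EVar 0) (EVar 1)) (EVar 2)) (EVar 3)), (EVar 4), (EVar 5)))].
Lemma check_ok : zcheck (tcomb T24 (EVar 5) ++ combine CERT).
Proof. by vm_compute. Qed.

Section Lie.
Variables (K : fieldType) (L : lmodType K) (br : L -> L -> L).
Hypothesis Hlie : is_lie_bracket br.

Lemma brDl x y z : br (x + y) z = br x z + br y z.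
Proof. by case: Hlie => H1 _ _ _; have := H1 1 x y z; rewrite !scale1r. Qed.
Lemma brDr x y z : br z (x + y) = br z x + br z y.
Proof. by case: Hlie => _ H2 _ _; have := H2 1 x y z; rewrite !scale1r. Qed.
Lemma br0l' z : br 0 z = 0.
Proof. have H := brDl 0 0 z; rewrite addr0 in H; apply: (addrI (br 0 z)); by rewrite addr0 -H. Qed.
Lemma br0r' z : br z 0 = 0.
Proof. have H := brDr 0 0 z; rewrite addr0 in H; apply: (addrI (br z 0)); by rewrite addr0 -H. Qed.
Lemma brZl a x z : br (a *: x) z = a *: br x z.
Proof. by case: Hlie => H1 _ _ _; have := H1 a x 0 z; rewrite !addr0 br0l' addr0. Qed.
Lemma brZr a x z : br z (a *: x) = a *: br z x.
Proof. by case: Hlie => _ H2 _ _; have := H2 a x 0 z; rewrite !addr0 br0r' addr0. Qed.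
Lemma brxx x : br x x = 0.
Proof. by case: Hlie. Qed.
Lemma brA x y : br x y = - br y x.
Proof.
have := brxx (x + y); rewrite brDl !brDr !brxx add0r addr0.
by move/eqP; rewrite addr_eq0 => /eqP.
Qed.
Lemma jac x y z : br (br x y) z + br (br y z) x + br (br z x) y = 0.
Proof. by case: Hlie. Qed.

Lemma brNl' x z : br (- x) z = - br x z.
Proof. by rewrite -scaleN1r brZl scaleN1r. Qed.
Lemma der1 p q z : br (br p q) z = br (br p z) q + br p (br q z).
Proof.
have H := jac p q z; rewrite (brA (br q z) p) (brA z p) brNl' in H.
by apply/eqP; rewrite -subr_eq0 opprD addrA addrAC H.
Qed.
Lemma der4 y a b c d z : br (br (br (br (br y a) b) c) d) z =
  br (br (br (br (br y z) a) b) c) d + (br (br (br (br y (br a z)) b) c) d +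
  (br (br (br (br y a) (br b z)) c) d + (br (br (br (br y a) b) (br c z)) d +
  (br (br (br (br y a) b) c) (br d z) + 0)))).
Proof.
rewrite (der1 (br (br (br y a) b) c) d z) (der1 (br (br y a) b) c z) !brDl.
rewrite (der1 (br y a) b z) !brDl (der1 y a z) !brDl.
by rewrite !addrA addr0.
Qed.

Definition upd (x : 'I_4 -> L) (i : 'I_4) (z : L) := fun k => if k == i then br (x k) z else x k.
Lemma std5_br x y z : br (std5 br x y) z = std5 br x (br y z) + \sum_(i < 4) std5 br (upd x i z) y.
Proof.
rewrite /std5 (br_suml brDl brZl) exchange_big -big_split /=.
apply: eq_bigr => s _; rewrite brZl -scaler_sumr -scalerDr; congr (_ *: _).
rewrite der4 (reindex_inj (@perm_inj _ s)) /= !big_ord_recl big_ord0 /=.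
rewrite /upd !(inj_eq perm_inj) -!val_eqE /= !inordK //=.
Qed.

Section Phi.
Variable phi : L -> L -> K.
Hypothesis Hc : comm_2cocycle br phi.
Lemma phiDl x y z : phi (x + y) z = phi x z + phi y z.
Proof. by case: Hc => -[H1 _] _ _; have := H1 1 x y z; rewrite scale1r mul1r. Qed.
Lemma phi0l' z : phi 0 z = 0.
Proof. have H := phiDl 0 0 z; rewrite addr0 in H; apply: (addrI (phi 0 z)); by rewrite addr0 -H. Qed.
Lemma phiZl a x z : phi (a *: x) z = a * phi x z.
Proof. by case: Hc => -[H1 _] _ _; have := H1 a x 0 z; rewrite !addr0 phi0l' addr0. Qed.
Lemma phiC x y : phi x y = phi y x.
Proof. by case: Hc. Qed.
Lemma coc x y z : phi (br x y) z + phi (br z x) y + phi (br y z) x = 0.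
Proof. by case: Hc. Qed.

Lemma phi_std5 (h6 : (6%:R : K) != 0) x y u : phi (std5 br x y) u = 0.
Proof.
pose e n := nth 0 [:: y; x (inord 0%N); x (inord 1%N); x (inord 2%N); x (inord 3%N); u] n.
have E := cert_sound brDl brZl brDr brZr brA jac phiDl phiZl phiC coc e check_ok.
rewrite /std5 (phi_suml phiDl phiZl).
pose H (b : bool) (n0 n1 n2 n3 : nat) : K := (-1) ^+ b * phi (br (br (br (br y (x (inord n0))) (x (inord n1))) (x (inord n2))) (x (inord n3))) u.
rewrite (eq_bigr (fun s : 'S_4 => H (odd_perm s) (s (inord 0)) (s (inord 1)) (s (inord 2)) (s (inord 3)))); last first.
  by move=> s _; rewrite /H phiZl !inord_val.
rewrite sumS4 /S4L !big_cons big_nil /H /=.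
rewrite /T24 !big_cons big_nil /e /= in E.
set S := (X in X = 0).
have : (6%:R : K) * S = 0 by rewrite -E /S; ring.
by move/eqP; rewrite mulf_eq0 (negbTE h6) => /eqP.
Qed.
End Phi.
End Lie.

Definition LieHyp (K : fieldType) (L : lmodType K) (br : L -> L -> L) (phi : L -> L -> K) :=
  is_lie_bracket br /\ comm_2cocycle br phi.

Section QL.
Variables (K : fieldType) (L : lmodType K) (br : L -> L -> L) (phi : L -> L -> K).

Definition inI (a : L) : Prop := forall (zs : seq L) (u : L), phi (foldl br a zs) u = 0.
Definition qcanon (a : L) : L := epsilon (inhabits (0 : L)) (fun b => inI (b - a)).

Hypothesis H : LieHyp br phi.
Let Hl := proj1 H.
Let Hc := proj2 H.

Lemma foldl_lin a p q zs : foldl br (a *: p + q) zs = a *: foldl br p zs + foldl br q zs.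
Proof.
elim: zs p q => [|z zs IH] p q //=.
by case: Hl => H1 _ _ _; rewrite H1 IH.
Qed.
Lemma foldl0 zs : foldl br 0 zs = 0.
Proof. by elim: zs => [|z zs IH] //=; rewrite br0l'. Qed.
Lemma inI0 : inI 0.
Proof. by move=> zs u; rewrite foldl0 (phi0l' Hc). Qed.
Lemma inI_lin a p q : inI p -> inI q -> inI (a *: p + q).
Proof. by move=> Hp Hq zs u; rewrite foldl_lin (phiDl Hc) (phiZl Hc) Hp Hq mulr0 addr0. Qed.
Lemma inI_add p q : inI p -> inI q -> inI (p + q).
Proof. by move=> Hp Hq; rewrite -[p]scale1r; apply: inI_lin. Qed.
Lemma inI_scale a p : inI p -> inI (a *: p).
Proof. by move=> Hp; rewrite -[_ *: _]addr0; apply: inI_lin => //; apply: inI0. Qed.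
Lemma inI_opp p : inI p -> inI (- p).
Proof. by move=> Hp; rewrite -scaleN1r; apply: inI_scale. Qed.
Lemma inI_sub p q : inI p -> inI q -> inI (p - q).
Proof. by move=> Hp Hq; apply: inI_add => //; apply: inI_opp. Qed.
Lemma inI_brl p z : inI p -> inI (br p z).
Proof. by move=> Hp zs u; apply: (Hp (z :: zs)). Qed.
Lemma inI_brr p z : inI p -> inI (br z p).
Proof. by move=> Hp; rewrite (brA Hl); apply: inI_opp; apply: inI_brl. Qed.

Lemma canon_spec a : inI (qcanon a - a).
Proof.
rewrite /qcanon; apply: (epsilon_spec (inhabits 0) (fun b => inI (b - a))).
by exists a; rewrite subrr; apply: inI0.
Qed.
Lemma canon_eq a b : inI (a - b) -> qcanon a = qcanon b.
Proof.
move=> Hab; rewrite /qcanon; congr epsilon; apply: functional_extensionality => c.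
apply: propositional_extensionality; split => Hx.
  by have := inI_add Hx Hab; rewrite addrA subrK.
by have := inI_sub Hx Hab; rewrite opprB subrKA.
Qed.
Lemma canon_inv a b : qcanon a = qcanon b -> inI (a - b).
Proof.
move=> E; have := inI_sub (canon_spec b) (canon_spec a); rewrite E.
by rewrite opprB addrC subrKA.
Qed.
Lemma canonK a : qcanon (qcanon a) = qcanon a.
Proof. by apply: canon_eq; apply: canon_spec. Qed.
End QL.

Record Mq (K : fieldType) (L : lmodType K) (br : L -> L -> L) (phi : L -> L -> K)
  (H : LieHyp br phi) := MkQ { qval : L; qvalP : qcanon br phi qval == qval }.
HB.instance Definition _ K L br phi H := [isSub for @qval K L br phi H].
HB.instance Definition _ K L br phi H := [Choice of @Mq K L br phi H by <:].

Section QOps.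
Variables (K : fieldType) (L : lmodType K) (br : L -> L -> L) (phi : L -> L -> K).
Variable H : LieHyp br phi.
Let Hl := proj1 H.
Let Hc := proj2 H.
Local Notation M := (Mq H).

Definition qpi (a : L) : M := @MkQ K L br phi H (qcanon br phi a) (introT eqP (canonK H a)).
Lemma qvalK m : qpi (qval m) = m.
Proof. by apply: val_inj => /=; apply/eqP; case: m. Qed.
Lemma qind (P : M -> Prop) : (forall a, P (qpi a)) -> forall m, P m.
Proof. by move=> Hp m; rewrite -(qvalK m). Qed.
Lemma qpi_eq a b : inI br phi (a - b) -> qpi a = qpi b.
Proof. by move=> Hab; apply: val_inj => /=; apply: canon_eq. Qed.
Lemma qpi_inv a b : qpi a = qpi b -> inI br phi (a - b).
Proof. by move/(congr1 val) => /= E; apply: (canon_inv H). Qed.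

Definition qzero : M := qpi 0.
Definition qopp (m : M) : M := qpi (- qval m).
Definition qadd (m n : M) : M := qpi (qval m + qval n).
Definition qscale (c : K) (m : M) : M := qpi (c *: qval m).
Definition qbr (m n : M) : M := qpi (br (qval m) (qval n)).

Lemma qaddE a b : qadd (qpi a) (qpi b) = qpi (a + b).
Proof.
apply: qpi_eq => /=; rewrite opprD addrACA.
by apply: inI_add => //; apply: canon_spec.
Qed.
Lemma qoppE a : qopp (qpi a) = qpi (- a).
Proof.
apply: qpi_eq => /=; rewrite -opprD.
by apply: inI_opp => //; apply: canon_spec.
Qed.
Lemma qscaleE c a : qscale c (qpi a) = qpi (c *: a).
Proof.
apply: qpi_eq => /=; rewrite -scalerBr.
by apply: inI_scale => //; apply: canon_spec.
Qed.
Lemma brNr' x z : br z (- x) = - br z x.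
Proof. by rewrite -scaleN1r (brZr Hl) scaleN1r. Qed.
Lemma qbrE a b : qbr (qpi a) (qpi b) = qpi (br a b).
Proof.
apply: qpi_eq => /=.
have -> : br (qcanon br phi a) (qcanon br phi b) - br a b =
  br (qcanon br phi a - a) (qcanon br phi b) + br a (qcanon br phi b - b).
  rewrite (brDl Hl) (brDr Hl) (brNl' Hl) brNr' addrA; congr (_ - _).
  by rewrite addrNK.
apply: inI_add => //.
  by apply: inI_brl => //; apply: canon_spec.
by apply: inI_brr => //; apply: canon_spec.
Qed.

Lemma qaddA : associative qadd.
Proof. by elim/qind => a; elim/qind => b; elim/qind => c; rewrite !qaddE addrA. Qed.
Lemma qaddC : commutative qadd.
Proof. by elim/qind => a; elim/qind => b; rewrite !qaddE addrC. Qed.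
Lemma qadd0 : left_id qzero qadd.
Proof. by elim/qind => a; rewrite /qzero qaddE add0r. Qed.
Lemma qaddN : left_inverse qzero qopp qadd.
Proof. by elim/qind => a; rewrite qoppE qaddE addNr. Qed.
End QOps.

HB.instance Definition _ K L br phi H :=
  GRing.isZmodule.Build (@Mq K L br phi H) (@qaddA K L br phi H) (@qaddC K L br phi H)
    (@qadd0 K L br phi H) (@qaddN K L br phi H).

Section QLmod.
Variables (K : fieldType) (L : lmodType K) (br : L -> L -> L) (phi : L -> L -> K).
Variable H : LieHyp br phi.
Local Notation M := (Mq H).
Lemma qpiD a b : qpi H a + qpi H b = qpi H (a + b).
Proof. exact: qaddE. Qed.
Lemma qscaleA a b (v : M) : qscale a (qscale b v) = qscale (a * b) v.
Proof. by elim/qind: v => x; rewrite !qscaleE // scalerA. Qed.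
Lemma qscale1 : left_id 1 (@qscale K L br phi H).
Proof. by elim/qind => x; rewrite qscaleE // scale1r. Qed.
Lemma qscaleDr : right_distributive (@qscale K L br phi H) +%R.
Proof. by move=> a; elim/qind => x; elim/qind => y; rewrite /= qpiD !qscaleE qpiD scalerDr. Qed.
Lemma qscaleDl (v : M) : {morph (fun a => qscale a v) : a b / a + b}.
Proof. move=> a b; elim/qind: v => x; by rewrite /= !qscaleE qpiD scalerDl. Qed.
End QLmod.

HB.instance Definition _ (K : fieldType) (L : lmodType K) (br : L -> L -> L) (phi : L -> L -> K) (H : LieHyp br phi) :=
  GRing.Zmodule_isLmodule.Build K (@Mq K L br phi H) (@qscaleA K L br phi H) (@qscale1 K L br phi H)
    (@qscaleDr K L br phi H) (@qscaleDl K L br phi H).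

Section Fin.
Variables (K : fieldType) (L : lmodType K) (br : L -> L -> L) (phi : L -> L -> K).
Variable H : LieHyp br phi.
Let Hl := proj1 H.
Let Hc := proj2 H.
Local Notation M := (Mq H).
Local Notation pi := (qpi H).

Lemma piD a b : pi (a + b) = pi a + pi b.
Proof. by rewrite qpiD. Qed.
Lemma piZ c a : pi (c *: a) = c *: pi a.
Proof. by rewrite -qscaleE. Qed.
Lemma pi0 : pi 0 = 0.
Proof. by []. Qed.
Lemma piB a b : pi (br a b) = qbr (pi a) (pi b).
Proof. by rewrite qbrE. Qed.
Lemma pi_sum I (r : seq I) (F : I -> L) : pi (\sum_(i <- r) F i) = \sum_(i <- r) pi (F i).
Proof. exact: (big_morph pi piD pi0). Qed.

Lemma qbr_lie : is_lie_bracket (@qbr K L br phi H).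
Proof.
case: Hl => H1 H2 H3 H4; split.
- move=> a; elim/qind => x; elim/qind => y; elim/qind => z.
  by rewrite -piZ -piD -!piB H1 piD piZ.
- move=> a; elim/qind => x; elim/qind => y; elim/qind => z.
  by rewrite -piZ -piD -!piB H2 piD piZ.
- by elim/qind => x; rewrite -piB H3.
- by elim/qind => x; elim/qind => y; elim/qind => z; rewrite -!piB -(piD (br (br x y) z)) -(piD (br (br x y) z + _)) H4.
Qed.

Lemma pi_hom : lie_hom br (@qbr K L br phi H) pi.
Proof. by split => [a x y|x y]; rewrite ?piD ?piZ ?piB. Qed.

Lemma foldlD a b zs : foldl br (a + b) zs = foldl br a zs + foldl br b zs.
Proof. by have := foldl_lin H 1 a b zs; rewrite !scale1r. Qed.

Hypothesis h6 : (6%:R : K) != 0.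

Lemma inI_std5 x y : inI br phi (std5 br x y).
Proof.
move=> zs; elim: zs x y => [|z zs IH] x y u /=; first exact: (phi_std5 Hl Hc).
rewrite (std5_br Hl) !big_ord_recl big_ord0 addr0 !foldlD !(phiDl Hc) !IH.
by rewrite !addr0.
Qed.

Lemma qstd5 : satisfies_std5 (@qbr K L br phi H).
Proof.
move=> xm; elim/qind => y.
have -> : xm = (fun i => pi (qval (xm i))) by apply: functional_extensionality => i; rewrite qvalK.
set x' := fun i => qval (xm i).
rewrite /std5.
under eq_bigr do rewrite -!piB -piZ.
rewrite -pi_sum -pi0; apply: qpi_eq; rewrite subr0.
exact: (inI_std5 (fun i => qval (xm i)) y).
Qed.
End Fin.

Unset Implicit Arguments.
Theorem lemma2p1 (K : fieldType) (L : lmodType K) (br : L -> L -> L) :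
  2%N \notin [pchar K] -> 3%N \notin [pchar K] ->
  is_lie_bracket br ->
  (exists phi : L -> L -> K, comm_2cocycle br phi /\ exists x y : L, phi x y != 0) ->
  exists (M : lmodType K) (brM : M -> M -> M) (f : L -> M),
    [/\ is_lie_bracket brM, lie_hom br brM f,
        (forall m : M, exists l : L, f l = m),
        (exists m : M, m != 0) &
        satisfies_std5 brM].
Proof.
move=> h2 h3 Hl [phi [Hc [x0 [y0 Hxy]]]].
have H : LieHyp br phi by [].
have h6 : (6%:R : K) != 0.
  rewrite (_ : 6 = 2 * 3)%N // natrM mulf_neq0 // natf_neq0_pchar pnatE //.
exists (Mq H), (@qbr K L br phi H), (qpi H); split.
- exact: qbr_lie.
- exact: pi_hom.
- by move=> m; exists (qval m); apply: qvalK.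
- exists (qpi H x0); apply/eqP => E.
  have := qpi_inv (E : qpi H x0 = qpi H 0) [::] y0; rewrite /= subr0 => E'.
  by rewrite E' eqxx in Hxy.
- exact: qstd5 h6.
Qed.
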